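(* Let $X,Y$ be Banach spaces, $f:X\to Y$ a function, $G:Y\rightrightarrows X$ a multifunction, $L,M>0$, and $(\overline{x},\overline{y},\overline{z})\in X\times Y\times Y$ with $\overline{y}=f(\overline{x})$ and $(\overline{z},\overline{x})\in\operatorname{Gr}G$. Suppose: (i) $f$ is Lipschitz continuous around $\overline{x}$; (ii) $\operatorname{Gr}G$ is locally closed around $(\overline{z},\overline{x})$; (iii) $f$ is $L$-open around $(\overline{x},\overline{y})$; (iv) $G$ is $M$-open around $(\overline{z},\overline{x})$; (v) $LM>1$. Then $f-G^{-1}$ is $(L-M^{-1})$-open around $(\overline{x},\overline{y}-\overline{z})$.
   Context: $B(x,r)$ denotes the open ball. $(f-G^{-1})(x)=\{f(x)-z: x\in G(z)\}$. A set-valued map $T:U\rightrightarrows V$ (a function being viewed as a single-valued map) is $L$-open around $(a,b)\in\operatorname{Gr}T$ if there exist $\varepsilon>0$ and neighborhoods $U_0$ of $a$, $V_0$ of $b$ such that for every $\rho\in]0,\varepsilon[$ and every $(u,v)\in\operatorname{Gr}T\cap(U_0\times V_0)$, $B(v,\rho L)\subset T(B(u,\rho))$. $\operatorname{Gr}G$ locally closed around a point means that its intersection with the closure of some neighborhood of that point is closed. *)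

(* Defs.v *)
From HB Require Import structures.
From mathcomp Require Import all_boot all_order all_algebra.
From mathcomp Require Import all_classical all_reals all_analysis.
Set Implicit Arguments. Unset Strict Implicit. Unset Printing Implicit Defensive.
Import Order.TTheory GRing.Theory Num.Theory.
Import numFieldNormedType.Exports.
Local Open Scope classical_set_scope.
Local Open Scope ring_scope.

(* A set-valued map T : U ⇉ V is represented as T : U -> set V;
   its graph is {(u,v) | v ∈ T u}. A function f is viewed as u |-> {f u}. *)
Definition graph {U V : Type} (T : U -> set V) : set (U * V) :=
  [set p | T p.1 p.2].

Definition single_valued {U V : Type} (f : U -> V) : U -> set V :=
  fun u => [set f u].

Definition L_open_around {R : realType} {U V : normedModType R}
    (L : R) (T : U -> set V) (a : U) (b : V) : Prop :=
  exists eps : R, 0 < eps /\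
  exists U0 : set U, nbhs a U0 /\
  exists V0 : set V, nbhs b V0 /\
  forall rho : R, 0 < rho -> rho < eps ->
  forall u v, T u v -> U0 u -> V0 v ->
    ball v (rho * L) `<=` [set w | exists2 u', ball u rho u' & T u' w].

Definition lipschitz_around {R : realType} {U V : normedModType R}
    (f : U -> V) (a : U) : Prop :=
  exists k : R, exists N : set U, nbhs a N /\
    forall x y, N x -> N y -> `|f x - f y| <= k * `|x - y|.

Definition locally_closed_around {T : topologicalType} (S : set T) (p : T) : Prop :=
  exists N : set T, nbhs p N /\ closed (S `&` closure N).

Definition minus_inv {R : realType} {X Y : normedModType R}
    (f : X -> Y) (G : Y -> set X) : X -> set Y :=
  fun x => [set f x - z | z in [set z | G z x]].

(* Main.v *)
Require Import Defs.
From HB Require Import structures.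
From mathcomp Require Import all_boot all_order all_algebra.
From mathcomp Require Import all_classical all_reals all_analysis.
From mathcomp Require Import ring lra.
Import Order.TTheory GRing.Theory Num.Theory.
Import numFieldNormedType.Exports.
Local Open Scope classical_set_scope.
Local Open Scope ring_scope.

Lemma dep_seq (T : Type) (P : nat -> T -> Prop) (Q : nat -> T -> T -> Prop) (s0 : T) :
  P 0%N s0 -> (forall n s, P n s -> exists s', P n.+1 s' /\ Q n s s') ->
  exists s : nat -> T, s 0%N = s0 /\ forall n, P n (s n) /\ Q n (s n) (s n.+1).
Proof.
move=> P0 step.
have : forall p : nat * T, exists s', P p.1 p.2 -> P p.1.+1 s' /\ Q p.1 p.2 s'.
  move=> [n s]; have [Ps|nPs] := pselect (P n s).
    by have [s' hs'] := step n s Ps; exists s'.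
  by exists s.
move=> /choice [g hg].
pose s := fix F n := if n is n'.+1 then g (n', F n') else s0.
have Hn : forall n, P n (s n).
  by elim => [|n IH] //=; exact: (hg (n, s n) IH).1.
exists s; split => // n; split => //; exact: (hg (n, s n) (Hn n)).2.
Qed.

Lemma nbhs_norm (R : realType) (V : normedModType R) (a : V) (A : set V) :
  nbhs a A -> exists2 d : R, 0 < d & forall y, `|a - y| < d -> A y.
Proof.
by move=> /nbhs_ballP[d d0 H]; exists d => // y hy; apply: H; rewrite -ball_normE.
Qed.

Lemma geom_small (R : realType) (q c : R) : 0 <= q -> q < 1 -> 0 < c ->
  exists N, q ^+ N < c.
Proof.
move=> q0 q1 c0.
have : `|q| < 1 by rewrite ger0_norm.
move=> /cvg_expr /cvgrPdist_lt /(_ c c0) [N _ HN].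
exists N; have := HN N (leqnn N); rewrite /= sub0r normrN ger0_norm //.
exact: exprn_ge0.
Qed.

Lemma seq_cvg_bound (R : realType) (V : completeNormedModType R) (s : nat -> V)
  (b q : R) : 0 < q -> q < 1 -> 0 < b ->
  (forall n k, `|s (n + k)%N - s n| <= b * q ^+ n) ->
  exists l : V, s @ \oo --> l /\ forall n, `|l - s n| <= b * q ^+ n.
Proof.
move=> q0 q1 b0 H.
have Hn : forall n m, (n <= m)%N -> `|s n - s m| <= b * q ^+ n.
  by move=> n m nm; rewrite distrC -(subnKC nm); apply: H.
have cv : cvg (s @ \oo).
  apply/cauchy_cvgP/cauchy_exP => eps eps0.
  have [N hN] := @geom_small _ _ _ (ltW q0) q1 (divr_gt0 eps0 b0).
  exists (s N); exists N => // n /= hn; rewrite -ball_normE /=.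
  apply: (le_lt_trans (Hn N n hn)).
  by rewrite mulrC -ltr_pdivlMr.
exists (lim (s @ \oo)); split => // n.
have bq0 : 0 < b * q ^+ n by rewrite mulr_gt0 // exprn_gt0.
have := @closed_cvg _ _ \oo _ s _ (@closed_ball_closed _ V (s n) (b * q ^+ n)).
rewrite closed_ballE //= => /(_ _ _ _ cv); rewrite distrC; apply.
by exists n => // m /= hm; apply: Hn.
Qed.
Arguments nbhs_norm {R V a A}.
Arguments geom_small {R q c}.
Arguments seq_cvg_bound {R V s b q}.
Arguments dep_seq {T P Q s0}.

Lemma tri (R : realType) (V : normedModType R) (a b c : V) :
  `|a - c| <= `|a - b| + `|b - c|.
Proof. by have := ler_normD (a - b) (b - c); rewrite addrA subrK. Qed.
Arguments tri {R V}.

Lemma res_id (V : zmodType) (w a b c : V) : w - (a + (w - (a - b)) - c) = c - b.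
Proof.
by rewrite addrCA [- (a - b)]opprB [a + (b - a)]addrC subrK -addrA opprD addNKr opprB.
Qed.

Lemma norm_sub2 (R : realType) (V : normedModType R) (a b c d : V) :
  `|(a - b) - (c - d)| <= `|a - c| + `|b - d|.
Proof. by rewrite opprD opprK addrACA (addrC (- b) d) (distrC b d); exact: ler_normD. Qed.
Arguments norm_sub2 {R V}.

Theorem corollary3p4 (R : realType) (X Y : completeNormedModType R)
  (f : X -> Y) (G : Y -> set X) (L M : R)
  (xb : X) (yb zb : Y) :
  0 < L -> 0 < M ->
  yb = f xb -> G zb xb ->
  lipschitz_around f xb ->
  locally_closed_around (graph G) (zb, xb) ->
  L_open_around L (single_valued f) xb yb ->
  L_open_around M G zb xb ->
  1 < L * M ->
  L_open_around (L - M^-1) (minus_inv f G) xb (yb - zb).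
Proof.
move=> L0 M0 -> Gzx [k [N1 [N1x lipf]]] [N2 [N2p N2cl]]
  [ef [ef0 [Uf [Ufx [Vf [Vfy fop]]]]]] [eg [eg0 [Ug [Ugz [Vg [Vgx Gop]]]]]] LM1.
have [d1 d10 H1] := nbhs_norm N1x.
have [d2 d20 H2] := nbhs_norm Ufx.
have [d3 d30 H3] := nbhs_norm Vgx.
have [d4 d40 H4] := nbhs_norm Ugz.
have [d5 d50 H5] := nbhs_norm Vfy.
have [d6 d60 H6] : exists2 d : R, 0 < d & forall a b, `|zb - a| < d -> `|xb - b| < d -> N2 (a, b).
  move: N2p => /nbhs_ballP[d d0 H]; exists d => // a b ha hb; apply: H.
  by split; rewrite /= -ball_normE.
pose del := Num.min (Num.min (Num.min d1 d2) (Num.min d3 d4)) (Num.min d5 d6).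
have del0 : 0 < del by rewrite !lt_min d10 d20 d30 d40 d50 d60.
have Hx : forall x, `|xb - x| < del -> [/\ N1 x, Uf x & Vg x].
  move=> x; rewrite !lt_min => /andP[/andP[/andP[a b] /andP[c d]] /andP[e g]].
  by split; [apply: H1 | apply: H2 | apply: H3].
have Hz : forall z, `|zb - z| < del -> Ug z.
  move=> x; rewrite !lt_min => /andP[/andP[/andP[a b] /andP[c d]] /andP[e g]].
  by apply: H4.
have Hy : forall y, `|f xb - y| < del -> Vf y.
  move=> x; rewrite !lt_min => /andP[/andP[/andP[a b] /andP[c d]] /andP[e g]].
  by apply: H5.
have Hp : forall a b, `|zb - a| < del -> `|xb - b| < del -> N2 (a, b).
  move=> a b; rewrite !lt_min => /andP[/andP[/andP[_ _] /andP[_ _]] /andP[_ ha]].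
  move=> /andP[/andP[/andP[_ _] /andP[_ _]] /andP[_ hb]].
  by apply: H6.
pose K := `|k| + 1.
have K0 : 0 < K by rewrite /K ltr_wpDl.
have lip : forall x y, N1 x -> N1 y -> `|f x - f y| <= K * `|x - y|.
  move=> x y hx hy; apply: (le_trans (lipf x y hx hy)).
  apply: ler_wpM2r => //; rewrite /K; apply: (le_trans (ler_norm k)).
  by rewrite lerDl.
pose C := 2 * K + 2 + M^-1.
have Mi0 : 0 < M^-1 by rewrite invr_gt0.
have C0 : 0 < C by rewrite /C; lra.
pose r := Num.min (Num.min ef (M * eg)) (del / C).
have r0 : 0 < r by rewrite !lt_min ef0 mulr_gt0 // divr_gt0.
have ref : r <= ef by rewrite /r !ge_min lexx.
have reg : r <= M * eg by rewrite /r !ge_min lexx orbT.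
have rC : r * C <= del.
  by rewrite -ler_pdivlMr // /r !ge_min lexx orbT.
have Kr : 0 < K * r by rewrite mulr_gt0.
have Mr : 0 < M^-1 * r by rewrite mulr_gt0.
have rCe : r * C = 2 * (K * r) + 2 * r + M^-1 * r by rewrite /C; ring.
have r2 : 2 * r < del by lra.
have rK2 : K * (2 * r) < del by lra.
have rz : r + K * r + M^-1 * r < del by lra.
exists r; split => //.
exists (ball xb r); split; first exact: nbhsx_ballx.
exists (ball (f xb - zb) r); split; first exact: nbhsx_ballx.
move=> rho rho0 rhor u v [z Gzu <-] Uu Vv w.
rewrite -!ball_normE /= in Uu Vv * => hw.
pose q := (L * M)^-1.
have LM0 : 0 < L * M by rewrite mulr_gt0.
have q0 : 0 < q by rewrite invr_gt0.
have q1 : q < 1 by rewrite invf_lt1.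
have Lq : L * q = M^-1.
  by rewrite /q invfM mulrA mulfV ?mul1r // gt_eqF.
have q1' : 0 < 1 - q by lra.
pose e0 := `|f u - z - w|.
have e00 : 0 <= e0 by exact: normr_ge0.
have e0L : e0 < L * (rho * (1 - q)).
  by rewrite mulrCA mulrBr mulr1 Lq.
have ha : e0 / L < rho * (1 - q) by rewrite ltr_pdivrMr // mulrC.
have haa : 0 <= e0 / L by rewrite divr_ge0 // ltW.
pose t0 := (e0 / L + rho * (1 - q)) / 2.
have t00 : 0 < t0 by rewrite /t0; lra.
have t0r : t0 < rho * (1 - q) by rewrite /t0; lra.
have t0a : e0 < L * t0.
  by rewrite -ltr_pdivrMl // mulrC /t0; lra.
pose D := t0 / (1 - q).
have Drho : D < rho by rewrite /D ltr_pdivrMr.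
pose A n := t0 * (1 - q ^+ n) / (1 - q).
have A0 : A 0%N = 0 by rewrite /A expr0 subrr mulr0 mul0r.
have AS : forall n, A n.+1 = A n + t0 * q ^+ n.
  by move=> n; rewrite /A exprS; field; exact: lt0r_neq0 q1'.
have AD : forall n, A n <= D.
  move=> n; have : D - A n = t0 * q ^+ n / (1 - q) by rewrite /D /A; field; exact: lt0r_neq0 q1'.
  move=> h; rewrite -subr_ge0 h; apply: divr_ge0; last exact: ltW.
  by apply: mulr_ge0; [exact: ltW | exact: exprn_ge0 (ltW q0)].
have Ank : forall n j, A (n + j)%N - A n <= D * q ^+ n.
  move=> n j.
  have : D * q ^+ n - (A (n + j)%N - A n) = D * q ^+ (n + j) 
    by rewrite /D /A exprD; field; exact: lt0r_neq0 q1'.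
  move=> h; rewrite -subr_ge0 h; apply: mulr_ge0; last exact: exprn_ge0 (ltW q0).
  by rewrite /D divr_ge0 // ltW.
have hxb : `|xb - xb| < del by rewrite subrr normr0.
have D0 : 0 <= D by rewrite /D divr_ge0 // ?ltW.
have [n1b _ _] := Hx xb hxb.
have locx : forall x, `|x - u| <= D -> `|xb - x| < del /\ `|xb - x| < 2 * r.
  move=> x hx; have := tri xb u x; rewrite (distrC u x) => h.
  suff h' : `|xb - x| < 2 * r by split => //; exact: lt_trans h' r2.
  apply: (le_lt_trans h); have -> : 2 * r = r + r by ring.
  by apply: ltr_leD => //; apply: (le_trans hx); exact: ltW (lt_trans Drho rhor).
have locfx : forall x, `|x - u| <= D -> `|f xb - f x| < del.
  move=> x hx; have [h1 h2] := locx x hx.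
  have [n1x _ _] := Hx x h1.
  apply: (le_lt_trans (lip _ _ n1b n1x)); apply: le_lt_trans rK2.
  by rewrite ler_wpM2l // ?ltW.
have locz : forall z', `|z' - z| <= D / M -> `|zb - z'| < del.
  move=> z' hz'; have := tri zb z z'; rewrite (distrC z z') => h.
  have hzb : `|zb - z| <= `|f xb - zb - (f u - z)| + `|f xb - f u|.
    have -> : zb - z = - (f xb - zb - (f u - z)) + (f xb - f u).
      by rewrite !opprB -addrA [zb - f xb + _]addrA subrK addrC addrA subrK.
    by rewrite (le_trans (ler_normD _ _)) // normrN.
  have hu : `|xb - u| < del by have [] := locx u; rewrite ?subrr ?normr0.
  have [n1u _ _] := Hx u hu.
  have hfu : `|f xb - f u| <= K * r.
    apply: (le_trans (lip _ _ n1b n1u)); by rewrite ler_wpM2l // ?ltW.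
  have hDM : D / M <= M^-1 * r by rewrite mulrC ler_wpM2l ?ltW // (lt_trans Drho rhor).
  apply: (le_lt_trans h); apply: (le_lt_trans _ rz); apply: lerD; last first.
    exact: le_trans hz' hDM.
  by apply: (le_trans hzb); apply: lerD => //; exact: ltW.
have t0rho : t0 < rho.
  by apply: (lt_le_trans t0r); rewrite ger_pMr // gerBl ltW.
pose P n (p : X * Y) := [/\ G p.2 p.1, `|p.1 - u| <= A n, `|p.2 - z| <= A n / M
  & `|w - (f p.1 - p.2)| < L * (t0 * q ^+ n)].
pose Q n (p p' : X * Y) :=
  `|p'.1 - p.1| <= t0 * q ^+ n /\ `|p'.2 - p.2| <= t0 * q ^+ n / M.
have P0 : P 0%N (u, z).
  split => /=; rewrite ?A0 ?subrr ?normr0 ?mul0r ?expr0 ?mulr1 //.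
  by rewrite distrC.
have step : forall n p, P n p -> exists p', P n.+1 p' /\ Q n p p'.
  move=> n [x z'] [/= Gzx' hx hz' hres].
  pose t := t0 * q ^+ n.
  have t0' : 0 < t by rewrite mulr_gt0 // exprn_gt0.
  have tt0 : t <= t0.
    by rewrite /t; apply: ler_piMr; [exact: ltW | apply: exprn_ile1; exact: ltW].
  have tef : t < ef by exact: le_lt_trans tt0 (lt_trans t0rho (lt_le_trans rhor ref)).
  have [h1 h2] := locx x (le_trans hx (AD n)).
  have [_ ufx vgx] := Hx x h1.
  have vffx := Hy _ (locfx x (le_trans hx (AD n))).
  have ugz := Hz _ (locz z' (le_trans hz' (ler_wpM2r (ltW Mi0) (AD n)))).
  pose y' := f x + (w - (f x - z')).
  have := fop t t0' tef x (f x) (erefl (f x)) ufx vffx y'.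
  case.
    rewrite -ball_normE /= opprD addrA subrr sub0r normrN mulrC.
    exact: hres.
  move=> x' hx' hfx'.
  rewrite -ball_normE /= in hx'.
  have tM0 : 0 < t / M by rewrite divr_gt0.
  have tMeg : t / M < eg by rewrite ltr_pdivrMr // mulrC; exact: lt_le_trans (le_lt_trans tt0 (lt_trans t0rho rhor)) reg.
  have := Gop (t / M) tM0 tMeg z' x Gzx' ugz vgx x'.
  case.
    by rewrite -ball_normE /= divfK ?gt_eqF.
  move=> z'' hz'' Gz''.
  rewrite -ball_normE /= in hz''.
  exists (x', z''); split; last by split => /=; rewrite distrC ltW.
  split => /=.
  - exact: Gz''.
  - by rewrite AS; apply: (le_trans (tri _ x _)); rewrite distrC -/t addrC; exact: lerD hx (ltW hx').
  - rewrite AS mulrDl; apply: (le_trans (tri _ z' _)); rewrite distrC.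
    by rewrite -/t addrC; exact: lerD hz' (ltW hz'').
  - rewrite /single_valued /= in hfx'; rewrite -hfx' /y' res_id distrC.
    have -> : L * (t0 * q ^+ n.+1) = t / M by rewrite /t exprS -Lq; ring.
    exact: hz''.
have [s [s0 Hs]] := @dep_seq _ P Q (u, z) P0 step.
pose xs n := (s n).1.
pose zs n := (s n).2.
have bxA : forall n j, `|xs (n + j)%N - xs n| <= A (n + j)%N - A n.
  move=> n; elim=> [|j IH]; first by rewrite addn0 !subrr normr0.
  rewrite addnS AS; apply: (le_trans (tri _ (xs (n + j)%N) _)).
  have [hq _] := (Hs (n + j)%N).2.
  rewrite addrAC [X in _ <= X]addrC; exact: lerD hq IH.
have bzA : forall n j, `|zs (n + j)%N - zs n| <= (A (n + j)%N - A n) / M.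
  move=> n; elim=> [|j IH]; first by rewrite addn0 !subrr normr0 mul0r.
  rewrite addnS AS; apply: (le_trans (tri _ (zs (n + j)%N) _)).
  have [_ hq] := (Hs (n + j)%N).2.
  rewrite /zs in IH hq *.
  by rewrite addrAC mulrDl [X in _ <= X]addrC; exact: lerD hq IH.
have D0' : 0 < D by rewrite /D divr_gt0.
have DM0 : 0 < D / M by rewrite divr_gt0.
have bx : forall n j, `|xs (n + j)%N - xs n| <= D * q ^+ n.
  by move=> n j; apply: (le_trans (bxA n j)).
have bz : forall n j, `|zs (n + j)%N - zs n| <= D / M * q ^+ n.
  move=> n j; apply: (le_trans (bzA n j)).
  rewrite mulrAC; apply: ler_wpM2r; [exact: ltW | exact: Ank].
have [xst [cx bxst]] := seq_cvg_bound q0 q1 D0' bx.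
have [zst [cz bzst]] := seq_cvg_bound q0 q1 DM0 bz.
have xs0 : xs 0%N = u by rewrite /xs s0.
have zs0 : zs 0%N = z by rewrite /zs s0.
have hxst : `|xst - u| <= D by have := bxst 0%N; rewrite xs0 expr0 mulr1.
exists xst; first by rewrite distrC; exact: le_lt_trans hxst Drho.
have Ps : forall n, `|xs n - u| <= D /\ `|zs n - z| <= D / M.
  move=> n; have [[_ h1 h2 _] _] := Hs n; split.
    exact: (le_trans h1 (AD n)).
  exact: (le_trans h2 (ler_wpM2r (ltW Mi0) (AD n))).
have Ggr : G zst xst.
  have ev : \forall n \near \oo, (graph G `&` closure N2) (zs n, xs n).
    exists 0%N => // n _ /=; have [[Gn _ _ _] _] := Hs n; split => //.
    apply: subset_closure; have [h1 h2] := Ps n.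
    by apply: Hp; [exact: locz | exact: (locx _ h1).1].
  by have [] := @closed_cvg _ _ \oo _ (fun n => (zs n, xs n)) _ N2cl ev (zst, xst) (cvg_pair cz cx).
exists zst => //.
pose Cf := L * t0 + K * D + D / M.
have Cf0 : 0 < Cf.
  by rewrite /Cf !addr_gt0 // mulr_gt0.
have [n1st _ _] := Hx xst (locx xst hxst).1.
have bnd : forall n, `|w - (f xst - zst)| <= Cf * q ^+ n.
  move=> n; have [[_ _ _ hres] _] := Hs n.
  have [n1n _ _] := Hx _ (locx _ (Ps n).1).1.
  apply: (le_trans (tri _ (f (xs n) - zs n) _)).
  have h2 := norm_sub2 (f (xs n)) (zs n) (f xst) zst.
  have hf : `|f (xs n) - f xst| <= K * (D * q ^+ n).
    apply: (le_trans (lip _ _ n1n n1st)); apply: ler_wpM2l; first exact: ltW.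
    by rewrite distrC.
  have hz : `|zs n - zst| <= D / M * q ^+ n by rewrite distrC.
  have -> : Cf * q ^+ n = L * (t0 * q ^+ n) + (K * (D * q ^+ n) + D / M * q ^+ n).
    by rewrite /Cf; ring.
  apply: lerD; first exact: ltW hres.
  by apply: (le_trans h2); exact: lerD hf hz.
apply/eqP; rewrite eq_sym -subr_eq0 -normr_le0.
rewrite leNgt; apply/negP => a0.
have [N hN] := geom_small (ltW q0) q1 (divr_gt0 a0 Cf0).
have := bnd N; rewrite leNgt => /negP; apply.
by rewrite mulrC -ltr_pdivlMr.
Qed.
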